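(* Let $f:\{0,1\}^n\to\{-1,1\}$ and put $\eta=\mathbb E_{x,y}\sum_{\alpha,\beta}\hat{f_x}^2(\alpha)\hat{f_y}^2(\beta)\widehat{f_{x+y}}^2(\alpha+\beta)$ and $\delta=\eta/6$. Let $\phi:\{0,1\}^n\to\{0,1\}^n$ be a random map whose values $\phi(x)$, $x\in\{0,1\}^n$, are independent with $\Pr(\phi(x)=\alpha)=\hat{f_x}^2(\alpha)$. Define $$L(\phi)=\Pr_{x,y}\Big(\phi(x)+\phi(y)=\phi(x+y),\ \hat{f_x}^2(\phi(x))\ge\delta,\ \hat{f_y}^2(\phi(y))\ge\delta,\ \widehat{f_{x+y}}^2(\phi(x+y))\ge\delta\Big),$$ with $x,y$ independent uniform. Then $\mathbb E_\phi L(\phi)\ge\eta/2$.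
   Context: $\{0,1\}^n$ is identified with $\mathbb F_2^n$. $\hat h(\alpha)=\mathbb E_z h(z)(-1)^{\langle\alpha,z\rangle}$; $f_y(x)=f(x)f(x+y)$. (By Parseval, $\sum_\alpha\hat{f_x}^2(\alpha)=1$, so the distribution of $\phi(x)$ is well defined.) *)

(* Defs.v *)
From mathcomp Require Import all_boot all_order all_algebra.
Set Implicit Arguments. Unset Strict Implicit. Unset Printing Implicit Defensive.
Import Order.TTheory GRing.Theory Num.Theory.
Local Open Scope ring_scope.

Definition cube (n : nat) := {ffun 'I_n -> bool}.

Definition addc n (x y : cube n) : cube n := [ffun i => x i (+) y i].

Definition dotc n (a z : cube n) : bool := \big[addb/false]_(i < n) (a i && z i).

Definition fhat (R : numFieldType) n (h : cube n -> R) (a : cube n) : R :=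
  (#|{: cube n}|%:R)^-1 * \sum_(z : cube n) h z * (-1) ^+ dotc a z.

Definition fder (R : numFieldType) n (f : cube n -> R) (y : cube n) : cube n -> R :=
  fun x => f x * f (addc x y).

Definition w2 (R : numFieldType) n (f : cube n -> R) (x a : cube n) : R :=
  (fhat (fder f x) a) ^+ 2.

Definition eta (R : numFieldType) n (f : cube n -> R) : R :=
  (#|{: cube n}|%:R ^+ 2)^-1 *
  \sum_(x : cube n) \sum_(y : cube n) \sum_(a : cube n) \sum_(b : cube n)
    w2 f x a * w2 f y b * w2 f (addc x y) (addc a b).

Definition Lphi (R : numFieldType) n (f : cube n -> R) (delta : R)
  (phi : {ffun cube n -> cube n}) : R :=
  (#|{: cube n}|%:R ^+ 2)^-1 *
  \sum_(x : cube n) \sum_(y : cube n)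
    ((addc (phi x) (phi y) == phi (addc x y))
     && (delta <= w2 f x (phi x))
     && (delta <= w2 f y (phi y))
     && (delta <= w2 f (addc x y) (phi (addc x y))))%:R.

(* E_phi L(phi), where the phi(x) are independent with
   Pr(phi(x) = a) = fx^2(a): the law of phi is the product measure. *)
Definition ELphi (R : numFieldType) n (f : cube n -> R) (delta : R) : R :=
  \sum_(phi : {ffun cube n -> cube n})
     (\prod_(x : cube n) w2 f x (phi x)) * Lphi f delta phi.

(* Main.v *)
Require Import Defs.
From mathcomp Require Import all_boot all_order all_algebra.
From mathcomp Require Import ring lra.
Import Order.TTheory GRing.Theory Num.Theory.
Set Implicit Arguments. Unset Strict Implicit. Unset Printing Implicit Defensive.
Local Open Scope ring_scope.

Definition z0 n : cube n := [ffun _ => false].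

Lemma addcC n (x y : cube n) : addc x y = addc y x.
Proof. by apply/ffunP=> i; rewrite !ffunE addbC. Qed.
Lemma addcA n (x y z : cube n) : addc x (addc y z) = addc (addc x y) z.
Proof. by apply/ffunP=> i; rewrite !ffunE addbA. Qed.
Lemma addcK n (x y : cube n) : addc (addc x y) y = x.
Proof. by apply/ffunP=> i; rewrite !ffunE addbK. Qed.
Lemma addcc n (x : cube n) : addc x x = z0 n.
Proof. by apply/ffunP=> i; rewrite !ffunE addbb. Qed.
Lemma addc0 n (x : cube n) : addc x (z0 n) = x.
Proof. by apply/ffunP=> i; rewrite !ffunE addbF. Qed.
Lemma addc_inj n (b : cube n) : injective (fun x : cube n => addc x b).
Proof. by move=> x y H; rewrite -(addcK x b) H addcK. Qed.
Lemma addc_eq0 n (x y : cube n) : (addc x y == z0 n) = (x == y).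
Proof.
apply/eqP/eqP=> [H|->]; last exact: addcc.
by rewrite -(addcK x y) H addcC addc0.
Qed.

Lemma dotcC n (a z : cube n) : dotc a z = dotc z a.
Proof. by apply: eq_bigr => i _; rewrite andbC. Qed.

Lemma dotcD n (a z w : cube n) : dotc a (addc z w) = dotc a z (+) dotc a w.
Proof.
rewrite /dotc -big_split /=; apply: eq_bigr => i _; rewrite ffunE.
by case: (a i); case: (z i); case: (w i).
Qed.

Lemma sumr_pivot (R : ringType) (T : finType) (F : T -> R) (a : T) :
  \sum_(j : T) F j * (j == a)%:R = F a.
Proof.
rewrite (bigD1 a) //= eqxx mulr1 big1 ?addr0 // => j /negbTE ->.
by rewrite mulr0.
Qed.

Lemma sumr_pivotl (R : ringType) (T : finType) (F : T -> R) (a : T) :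
  \sum_(j : T) (a == j)%:R * F j = F a.
Proof.
rewrite (bigD1 a) //= eqxx mul1r big1 ?addr0 // => j /negbTE.
by rewrite eq_sym => ->; rewrite mul0r.
Qed.

Lemma char_sum (R : realFieldType) n (v : cube n) :
  \sum_(z : cube n) (-1) ^+ dotc v z = if v == z0 n then #|{: cube n}|%:R else 0 :> R.
Proof.
case: eqP => [->|/eqP Hv].
  rewrite (eq_bigr (fun _ => 1)) ?sumr_const ?card_ord //.
  move=> z _; suff -> : dotc (z0 n) z = false by [].
  by rewrite /dotc big1 // => i _; rewrite ffunE.
have [i Hi] : exists i, v i.
  apply/existsP; apply: contraR Hv => /existsPn H.
  by apply/eqP/ffunP=> i; rewrite ffunE; apply/negbTE/H.
pose e : cube n := [ffun k => k == i].
have He : dotc v e = true.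
  rewrite /dotc (bigD1 i) //= ffunE eqxx Hi big1 // => k /negbTE Hk.
  by rewrite ffunE Hk andbF.
set S := \sum_z _.
have : S = - S.
  rewrite {1}/S (reindex_inj (@addc_inj n e)) /= -sumrN.
  by apply: eq_bigr => z _; rewrite dotcD He signr_addb expr1 mulrN1.
lra.
Qed.

Lemma card_pos n : (0 < #|{: cube n}|)%N.
Proof. by apply/card_gt0P; exists (z0 n). Qed.

Lemma Nneq0 (R : realFieldType) n : (#|{: cube n}|%:R : R) != 0.
Proof. by rewrite pnatr_eq0 -lt0n card_pos. Qed.

Lemma char_sum2 (R : realFieldType) n (z z' : cube n) :
  \sum_(a : cube n) (-1) ^+ dotc a z * (-1) ^+ dotc a z'
  = (z' == z)%:R * #|{: cube n}|%:R :> R.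
Proof.
rewrite (eq_bigr (fun a => (-1) ^+ dotc (addc z z') a)); last first.
  by move=> a _; rewrite (dotcC (addc z z')) dotcD signr_addb.
rewrite char_sum addc_eq0 eq_sym; case: (z' == z); by rewrite ?mul1r ?mul0r.
Qed.

Lemma parseval (R : realFieldType) n (g : cube n -> R)
  (hg : forall z, g z ^+ 2 = 1) :
  \sum_(a : cube n) (fhat g a) ^+ 2 = 1.
Proof.
set N := (#|{: cube n}|%:R : R).
have HN : N != 0 by exact: Nneq0.
transitivity (\sum_(a : cube n) N^-1 * N^-1 * \sum_(z : cube n) \sum_(z' : cube n)
    g z * g z' * ((-1) ^+ dotc a z * (-1) ^+ dotc a z')).
  apply: eq_bigr => a _; rewrite /fhat expr2 mulrACA; congr (_ * _).
  rewrite mulr_suml; apply: eq_bigr => z _; rewrite mulr_sumr.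
  by apply: eq_bigr => z' _; ring.
rewrite -mulr_sumr exchange_big /=.
rewrite (eq_bigr (fun z => g z * g z * N)); last first.
  move=> z _; rewrite exchange_big /=.
  rewrite (eq_bigr (fun z' => g z * g z' * ((z' == z)%:R * N))); last first.
    by move=> z' _; rewrite -mulr_sumr char_sum2.
  rewrite (eq_bigr (fun z' => (g z * g z' * N) * (z' == z)%:R)).
    by rewrite sumr_pivot.
  by move=> z' _; ring.
rewrite (eq_bigr (fun z => N)); last by move=> z _; rewrite -expr2 hg mul1r.
rewrite sumr_const -[_ *+ _]mulr_natl -/N.
by field.
Qed.

Lemma fder_sq (R : realFieldType) n (f : cube n -> R)
  (hf : forall x, f x = 1 \/ f x = -1) u z : fder f u z ^+ 2 = 1.
Proof.
rewrite /fder exprMn.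
by case: (hf z) => ->; case: (hf (addc z u)) => ->; rewrite ?expr1n ?sqrrN ?expr1n ?mulr1.
Qed.

Lemma W_ge0 (R : realFieldType) n (f : cube n -> R) u a : 0 <= w2 f u a.
Proof. exact: sqr_ge0. Qed.

Lemma W_sum1 (R : realFieldType) n (f : cube n -> R)
  (hf : forall x, f x = 1 \/ f x = -1) u : \sum_a w2 f u a = 1.
Proof. by apply: parseval => z; apply: fder_sq. Qed.

Lemma W_le1 (R : realFieldType) n (f : cube n -> R)
  (hf : forall x, f x = 1 \/ f x = -1) u a : w2 f u a <= 1.
Proof.
rewrite -(W_sum1 hf u) (bigD1 a) //= lerDl; apply: sumr_ge0 => j _; exact: W_ge0.
Qed.

Lemma W0 (R : realFieldType) n (f : cube n -> R)
  (hf : forall x, f x = 1 \/ f x = -1) a : a != z0 n -> w2 f (z0 n) a = 0.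
Proof.
move=> Ha; rewrite /w2 /fhat.
rewrite (eq_bigr (fun z => (-1) ^+ dotc a z)); last first.
  move=> z _; rewrite /fder addc0.
  by case: (hf z) => ->; rewrite ?mulr1 ?mulrNN ?mulr1 ?mul1r.
by rewrite char_sum (negbTE Ha) mulr0 expr0n.
Qed.

Lemma prod_seq (R : comRingType) (T : finType) (F : T -> R) (s : seq T) :
  uniq s -> (forall u, u \notin s -> F u = 1) -> \prod_u F u = \prod_(u <- s) F u.
Proof.
move=> Us H1; rewrite (bigID (mem s)) /= [X in _ * X]big1 ?mulr1; last first.
  by move=> u Hu; apply: H1.
by rewrite big_uniq.
Qed.

Lemma addc_eqx n (x y : cube n) : addc x y = x -> y = z0 n.
Proof. by move=> H; rewrite -(addcK y x) (addcC y x) H addcc. Qed.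
Lemma addc_eqy n (x y : cube n) : addc x y = y -> x = z0 n.
Proof. by rewrite addcC; apply: addc_eqx. Qed.

Lemma le3 (R : realFieldType) (p q r : R) : 0 <= p -> p <= 1 -> 0 <= q -> q <= 1 -> 0 <= r -> p * q * r <= r.
Proof.
move=> *; have h : p * q <= 1 by apply: mulr_ile1.
by rewrite -[X in _ <= X]mul1r ler_wpM2r.
Qed.

Definition Sx (R : realFieldType) n (f : cube n -> R) (x y z a b c u : cube n) : R :=
  \sum_(j : cube n) w2 f u j * (((u == x) ==> (j == a))%:R
     * ((u == y) ==> (j == b))%:R * ((u == z) ==> (j == c))%:R).

Lemma prod_lb (R : realFieldType) n (f : cube n -> R)
  (hf : forall x, f x = 1 \/ f x = -1) (x y z a b c : cube n) :
  z = addc x y -> c = addc a b ->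
  w2 f x a * w2 f y b * w2 f z c <= \prod_u Sx f x y z a b c u.
Proof.
move=> Hz Hc.
have Wg := @W_ge0 R n f; have Wl := W_le1 hf; have W0' := W0 hf.
have Sout : forall u, u \notin [:: x; y; z] -> Sx f x y z a b c u = 1.
  move=> u; rewrite !inE !negb_or => /and3P [ux uy uz].
  rewrite /Sx (negbTE ux) (negbTE uy) (negbTE uz) -[X in _ = X](W_sum1 hf u); apply: eq_bigr => j _.
  by rewrite !implyFb /= !mulr1n !mulr1.
have [Exy|Nxy] := eqVneq x y.
  have Ez : z = z0 n by rewrite Hz Exy addcc.
  have [Exz|Nxz] := eqVneq x z.
    move: Ez; rewrite -Exz => Ex; clear Hz; subst z y.
    rewrite (@prod_seq _ _ _ [:: x]) //; last first.
      by move=> u Hu; apply: Sout; move: Hu; rewrite !inE; case: (u == x).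
    rewrite big_cons big_nil mulr1 /Sx !eqxx.
    rewrite (eq_bigr (fun j => (w2 f x j * (j == a)%:R * (j == b)%:R) * (j == c)%:R));
      last by move=> j _ /=; rewrite ?mulr1n; ring.
    rewrite sumr_pivot.
    have [Eab|Nab] := eqVneq a b.
      subst b; have [Eca|Nca] := eqVneq c a.
        rewrite mulr1n !mulr1.
        by apply: le3.
      have Ha : a != z0 n.
        apply: contra Nca => /eqP Ha; apply/eqP; by rewrite Hc Ha addcc.
      rewrite Ex (W0' a) // mulr0 ?mulr0 ?mul0r ?lexx //; repeat apply: mulr_ge0; by rewrite ?Wg ?ler0n.
    have Hcn : c != z0 n by rewrite Hc addc_eq0.
    rewrite Ex (W0' c) // ?mulr0 ?mul0r ?lexx //; repeat apply: mulr_ge0; by rewrite ?Wg ?ler0n.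
  subst y.
  rewrite (@prod_seq _ _ _ [:: x; z]) //; last 2 first.
    by rewrite /= inE Nxz.
    by move=> u Hu; apply: Sout; move: Hu; rewrite !inE; case: (u == x); case: (u == z).
  rewrite !big_cons big_nil mulr1 /Sx !eqxx (negbTE Nxz) eq_sym (negbTE Nxz).
  rewrite [X in _ <= X * _](eq_bigr (fun j => (w2 f x j * (j == a)%:R) * (j == b)%:R));
    last by move=> j _ /=; rewrite ?mulr1n; ring.
  rewrite [X in _ <= _ * X](eq_bigr (fun j => w2 f z j * (j == c)%:R));
    last by move=> j _ /=; rewrite ?mulr1n; ring.
  rewrite !sumr_pivot.
  have [Eab|Nab] := eqVneq a b.
    subst b; rewrite mulr1n mulr1.
    have := Wl x a; have := mulr_ge0 (Wg x a) (Wg z c); nra.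
  have Hcn : c != z0 n by rewrite Hc addc_eq0.
  rewrite Ez W0' // ?mulr0 ?mul0r ?lexx //; repeat apply: mulr_ge0; by rewrite ?Wg ?ler0n.
have [Exz|Nxz] := eqVneq x z.
  have Ey : y = z0 n by apply: (@addc_eqx _ x); rewrite -Hz.
  move: Exz => /esym Ezx; rewrite Ezx in Sout *; clear Hz.
  rewrite (@prod_seq _ _ _ [:: x; y]) //; last 2 first.
    by rewrite /= inE Nxy.
    by move=> u Hu; apply: Sout; move: Hu; rewrite !inE; case: (u == x); case: (u == y).
  rewrite !big_cons big_nil mulr1 /Sx !eqxx (negbTE Nxy) eq_sym (negbTE Nxy).
  rewrite [X in _ <= X * _](eq_bigr (fun j => (w2 f x j * (j == a)%:R * (true)%:R) * (j == c)%:R));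
    last by move=> j _ /=; rewrite ?mulr1n; ring.
  rewrite [X in _ <= _ * X](eq_bigr (fun j => w2 f y j * (j == b)%:R));
    last by move=> j _ /=; rewrite ?mulr1n; ring.
  rewrite !sumr_pivot.
  have [Eca|Nca] := eqVneq c a.
    rewrite Eca !mulr1n !mulr1.
    have := Wl x a; have := mulr_ge0 (Wg x a) (Wg y b); nra.
  have Hb : b != z0 n.
    apply: contra Nca => /eqP Hb; apply/eqP; by rewrite Hc Hb addc0.
  rewrite Ey W0' // ?mulr0 ?mul0r ?lexx //; repeat apply: mulr_ge0;
    by rewrite ?Wg ?ler0n.
have [Eyz|Nyz] := eqVneq y z.
  have Ex : x = z0 n by apply: (@addc_eqy _ _ y); rewrite -Hz.
  move: Eyz => /esym Ezy; rewrite Ezy in Sout *; clear Hz.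
  rewrite (@prod_seq _ _ _ [:: x; y]) //; last 2 first.
    by rewrite /= inE Nxy.
    by move=> u Hu; apply: Sout; move: Hu; rewrite !inE; case: (u == x); case: (u == y).
  rewrite !big_cons big_nil mulr1 /Sx !eqxx (negbTE Nxy) eq_sym (negbTE Nxy).
  rewrite [X in _ <= X * _](eq_bigr (fun j => w2 f x j * (j == a)%:R));
    last by move=> j _ /=; rewrite ?mulr1n; ring.
  rewrite [X in _ <= _ * X](eq_bigr (fun j => (w2 f y j * (j == b)%:R) * (j == c)%:R));
    last by move=> j _ /=; rewrite ?mulr1n; ring.
  rewrite !sumr_pivot.
  have [Ecb|Ncb] := eqVneq c b.
    rewrite Ecb !mulr1n !mulr1.
    have := Wl y b; have := mulr_ge0 (Wg x a) (Wg y b); nra.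
  have Ha : a != z0 n.
    apply: contra Ncb => /eqP Ha; apply/eqP; by rewrite Hc Ha addcC addc0.
  rewrite Ex W0' // ?mulr0 ?mul0r ?lexx //; repeat apply: mulr_ge0;
    by rewrite ?Wg ?ler0n.
rewrite (@prod_seq _ _ _ [:: x; y; z]) //; last first.
  by rewrite /= !inE negb_or Nxy Nxz Nyz.
rewrite !big_cons big_nil mulr1 /Sx !eqxx (negbTE Nxy) (negbTE Nxz) (negbTE Nyz).
rewrite (eq_sym y x) (eq_sym z x) (eq_sym z y) (negbTE Nxy) (negbTE Nxz) (negbTE Nyz).
rewrite [X in _ <= X * _](eq_bigr (fun j => w2 f x j * (j == a)%:R));
  last by move=> j _ /=; rewrite ?mulr1n; ring.
rewrite [X in _ <= _ * (X * _)](eq_bigr (fun j => w2 f y j * (j == b)%:R));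
  last by move=> j _ /=; rewrite ?mulr1n; ring.
rewrite [X in _ <= _ * (_ * X)](eq_bigr (fun j => w2 f z j * (j == c)%:R));
  last by move=> j _ /=; rewrite ?mulr1n; ring.
by rewrite !sumr_pivot mulrA.
Qed.

Lemma prod_imp (R : comRingType) (T : finType) (q : T -> bool) (x : T) :
  \prod_(u : T) ((u == x) ==> q u)%:R = (q x)%:R :> R.
Proof.
rewrite (bigD1 x) //= eqxx /= big1 ?mulr1 // => u /negbTE ->.
by rewrite /= mulr1n.
Qed.

Lemma boolM (R : ringType) (b1 b2 : bool) : ((b1 && b2)%:R : R) = b1%:R * b2%:R.
Proof. by case: b1; case: b2; rewrite /= ?mulr1n ?mulr0n ?mulr1 ?mulr0. Qed.

Lemma E3 (R : realFieldType) n (f : cube n -> R) (x y z a b c : cube n) :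
  \sum_(phi : {ffun cube n -> cube n}) (\prod_(u : cube n) w2 f u (phi u)) *
     ((phi x == a)%:R * (phi y == b)%:R * (phi z == c)%:R)
  = \prod_u Sx f x y z a b c u.
Proof.
rewrite /Sx bigA_distr_bigA /=; apply: eq_bigr => phi _.
rewrite big_split /= !big_split /= !prod_imp.
done.
Qed.

Definition Kd (R : realFieldType) n (f : cube n -> R) (d : R) (x y a b : cube n) : R :=
  ((d <= w2 f x a)%R)%:R * ((d <= w2 f y b)%R)%:R * ((d <= w2 f (addc x y) (addc a b))%R)%:R.

Lemma ind_decomp (R : realFieldType) n (f : cube n -> R) (d : R)
  (phi : {ffun cube n -> cube n}) (x y : cube n) :
  ((addc (phi x) (phi y) == phi (addc x y))
     && (d <= w2 f x (phi x))
     && (d <= w2 f y (phi y))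
     && (d <= w2 f (addc x y) (phi (addc x y))))%:R
  = \sum_(a : cube n) \sum_(b : cube n) (phi x == a)%:R * (phi y == b)%:R
       * (phi (addc x y) == addc a b)%:R * Kd f d x y a b :> R.
Proof.
symmetry.
transitivity (\sum_(a : cube n) (phi x == a)%:R * \sum_(b : cube n) ((phi y == b)%:R
       * ((phi (addc x y) == addc a b)%:R * Kd f d x y a b))).
  apply: eq_bigr => a _; rewrite mulr_sumr; apply: eq_bigr => b _; ring.
rewrite sumr_pivotl sumr_pivotl /Kd !boolM.
case E: (addc (phi x) (phi y) == phi (addc x y)).
  move/eqP: E => E; rewrite -E eqxx /= mulr1n; ring.
by rewrite eq_sym E /= mulr0n; ring.
Qed.

Lemma pair_lb (R : realFieldType) n (f : cube n -> R)
  (hf : forall x, f x = 1 \/ f x = -1) (d : R) (x y : cube n) :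
  \sum_(a : cube n) \sum_(b : cube n) Kd f d x y a b *
      (w2 f x a * w2 f y b * w2 f (addc x y) (addc a b))
  <= \sum_(phi : {ffun cube n -> cube n}) (\prod_(u : cube n) w2 f u (phi u)) *
     ((addc (phi x) (phi y) == phi (addc x y))
     && (d <= w2 f x (phi x))
     && (d <= w2 f y (phi y))
     && (d <= w2 f (addc x y) (phi (addc x y))))%:R.
Proof.
rewrite (eq_bigr (fun phi : {ffun cube n -> cube n} => \sum_(a : cube n) (\prod_(u : cube n) w2 f u (phi u)) * \sum_(b : cube n) (phi x == a)%:R * (phi y == b)%:R
       * (phi (addc x y) == addc a b)%:R * Kd f d x y a b)); last first.
  move=> phi _; rewrite ind_decomp mulr_sumr //.
rewrite [X in _ <= X]exchange_big /=; apply: ler_sum => a _.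
under eq_bigr => phi _ do rewrite mulr_sumr.
rewrite [X in _ <= X]exchange_big /=; apply: ler_sum => b _.
have -> : \sum_(phi : {ffun cube n -> cube n}) (\prod_(u : cube n) w2 f u (phi u)) *
     ((phi x == a)%:R * (phi y == b)%:R * (phi (addc x y) == addc a b)%:R * Kd f d x y a b)
  = Kd f d x y a b * \sum_(phi : {ffun cube n -> cube n}) (\prod_(u : cube n) w2 f u (phi u)) *
     ((phi x == a)%:R * (phi y == b)%:R * (phi (addc x y) == addc a b)%:R).
  by rewrite mulr_sumr; apply: eq_bigr => phi _; ring.
rewrite E3; apply: ler_wpM2l; first by rewrite /Kd; repeat apply: mulr_ge0; rewrite ?ler0n.
exact: prod_lb.
Qed.

Lemma termwise (R : realFieldType) (d p q r : R) :
  0 <= d -> 0 <= p -> 0 <= q -> 0 <= r ->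
  p * q * r - d * (q * r + p * r + p * q) <=
  ((d <= p)%R)%:R * ((d <= q)%R)%:R * ((d <= r)%R)%:R * (p * q * r).
Proof.
move=> hd hp hq hr.
have hpq := mulr_ge0 hp hq; have hqr := mulr_ge0 hq hr; have hpr := mulr_ge0 hp hr.
case: (leP d p) => h1; case: (leP d q) => h2; case: (leP d r) => h3;
  rewrite /= ?mulr1n ?mulr0n ?mul1r ?mul0r; nra.
Qed.

Lemma sum_shiftl (R : realFieldType) n (f : cube n -> R)
  (hf : forall x, f x = 1 \/ f x = -1) u b : \sum_(a : cube n) w2 f u (addc a b) = 1.
Proof.
by rewrite -(W_sum1 hf u) [RHS](reindex_inj (@addc_inj n b)).
Qed.

Lemma sum_shiftr (R : realFieldType) n (f : cube n -> R)
  (hf : forall x, f x = 1 \/ f x = -1) u a : \sum_(b : cube n) w2 f u (addc a b) = 1.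
Proof.
under eq_bigr => b _ do rewrite addcC.
exact: sum_shiftl.
Qed.

Lemma sum_const1 (R : realFieldType) n :
  \sum_(x : cube n) \sum_(y : cube n) (1 : R) = #|{: cube n}|%:R ^+ 2.
Proof.
rewrite (eq_bigr (fun _ => #|{: cube n}|%:R)); last by move=> x _; rewrite sumr_const.
by rewrite sumr_const -[LHS]mulr_natr expr2.
Qed.

Lemma lin1 (R : realFieldType) (T : finType) (F G1 G2 G3 : T -> R) (d : R) :
  \sum_i (F i - d * (G1 i + G2 i + G3 i))
  = \sum_i F i - d * (\sum_i G1 i + \sum_i G2 i + \sum_i G3 i).
Proof. by rewrite sumrB -mulr_sumr !big_split. Qed.

Lemma T1 (R : realFieldType) n (f : cube n -> R)
  (hf : forall x, f x = 1 \/ f x = -1) (x y : cube n) :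
  \sum_(a : cube n) \sum_(b : cube n) w2 f y b * w2 f (addc x y) (addc a b) = 1.
Proof.
rewrite exchange_big /= -(W_sum1 hf y); apply: eq_bigr => b _.
by rewrite -mulr_sumr sum_shiftl // mulr1.
Qed.

Lemma T2 (R : realFieldType) n (f : cube n -> R)
  (hf : forall x, f x = 1 \/ f x = -1) (x y : cube n) :
  \sum_(a : cube n) \sum_(b : cube n) w2 f x a * w2 f (addc x y) (addc a b) = 1.
Proof.
rewrite -(W_sum1 hf x); apply: eq_bigr => a _.
by rewrite -mulr_sumr sum_shiftr // mulr1.
Qed.

Lemma T3 (R : realFieldType) n (f : cube n -> R)
  (hf : forall x, f x = 1 \/ f x = -1) (x y : cube n) :
  \sum_(a : cube n) \sum_(b : cube n) w2 f x a * w2 f y b = 1.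
Proof.
rewrite -(W_sum1 hf x); apply: eq_bigr => a _.
by rewrite -mulr_sumr W_sum1 // mulr1.
Qed.

Unset Implicit Arguments.

Theorem lemma6p7 (R : realFieldType) (n : nat) (f : cube n -> R)
  (hf : forall x, f x = 1 \/ f x = -1) :
  ELphi f (eta f / 6) >= eta f / 2.
Proof.
set N2 := (#|{: cube n}|%:R : R) ^+ 2.
have HN2 : N2 != 0 by rewrite expf_neq0 // Nneq0.
have N2p : 0 < N2 by rewrite exprn_gt0 // ltr0n card_pos.
set M := \sum_(x : cube n) \sum_(y : cube n) \sum_(a : cube n) \sum_(b : cube n)
    w2 f x a * w2 f y b * w2 f (addc x y) (addc a b).
have Heta : eta f = N2^-1 * M by [].
have M0 : 0 <= M.
  do 4! (apply: sumr_ge0 => ? _); apply: mulr_ge0; [apply: mulr_ge0|]; exact: W_ge0.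
set d := eta f / 6.
have d0 : 0 <= d.
  by rewrite /d Heta; apply: divr_ge0 => //; apply: mulr_ge0 => //; rewrite invr_ge0 ltW.
set S := \sum_(x : cube n) \sum_(y : cube n)
  \sum_(phi : {ffun cube n -> cube n}) (\prod_(u : cube n) w2 f u (phi u)) *
     ((addc (phi x) (phi y) == phi (addc x y))
     && (d <= w2 f x (phi x))
     && (d <= w2 f y (phi y))
     && (d <= w2 f (addc x y) (phi (addc x y))))%:R.
have HE : ELphi f d = N2^-1 * S.
  rewrite /ELphi /Lphi /S.
  under eq_bigr => phi _ do rewrite mulrCA.
  rewrite -mulr_sumr; congr (_ * _).
  under eq_bigr => phi _ do rewrite mulr_sumr.
  rewrite exchange_big /=; apply: eq_bigr => x _.
  under eq_bigr => phi _ do rewrite mulr_sumr.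
  by rewrite exchange_big.
have HS : M - d * (N2 + N2 + N2) <= S.
  have E : \sum_(x : cube n) \sum_(y : cube n) \sum_(a : cube n) \sum_(b : cube n)
      (w2 f x a * w2 f y b * w2 f (addc x y) (addc a b)
       - d * (w2 f y b * w2 f (addc x y) (addc a b)
              + w2 f x a * w2 f (addc x y) (addc a b)
              + w2 f x a * w2 f y b)) = M - d * (N2 + N2 + N2).
    under eq_bigr => x _ do under eq_bigr => y _ do under eq_bigr => a _ do rewrite lin1.
    under eq_bigr => x _ do under eq_bigr => y _ do rewrite lin1.
    under eq_bigr => x _ do rewrite lin1.
    rewrite lin1.
    under [X in _ - d * (X + _ + _)]eq_bigr => x _ do under eq_bigr => y _ do rewrite T1 //.
    under [X in _ - d * (_ + X + _)]eq_bigr => x _ do under eq_bigr => y _ do rewrite T2 //.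
    under [X in _ - d * (_ + _ + X)]eq_bigr => x _ do under eq_bigr => y _ do rewrite T3 //.
    by rewrite sum_const1.
  rewrite -E /S; apply: ler_sum => x _; apply: ler_sum => y _.
  apply: le_trans (pair_lb hf d x y).
  apply: ler_sum => a _; apply: ler_sum => b _.
  rewrite /Kd; apply: termwise => //; exact: W_ge0.
rewrite HE.
have HM : M - d * (N2 + N2 + N2) = M / 2.
  by rewrite /d Heta; field.
have H2 : eta f / 2 = N2^-1 * (M / 2) by rewrite Heta mulrA.
rewrite H2; apply: ler_wpM2l; first by rewrite invr_ge0 ltW.
by rewrite -HM.
Qed.
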